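(* Let $G=(V,E)$ be a nice graph with $V=\{1,\dots,n\}$, and let $K\in\mathbb{N}^E$. The following are equivalent: (1) $K$ is sufficient for $G$; (2) $\langle H_E^{K'},Q_E\rangle\neq 0$ for some $K'\in\mathbb{N}^E_{|E|}$ with $K'\le K$; (3) $\langle F,Q_E\rangle\neq0$ for some $F\in W^K_{E,|E|}$; (4) $\mathrm{per}(C_G(K'))\neq 0$ for some $K'\in\mathbb{N}^E_{|E|}$ with $K'\le K$.
   Context: All graphs are finite and simple; an edge is a $2$-subset $\{i,j\}$ of $V$; $E(i)$ is the set of edges incident to $i$; a graph is nice if it has no edge both of whose endpoints have degree $1$. For a finite set $E$, $\mathbb{N}^E$ is the set of maps $E\to\mathbb{N}$ and $\mathbb{N}^E_m=\{K\in\mathbb{N}^E:\sum_eK(e)=m\}$; $K\le K'$ means $K(e)\le K'(e)$ for all $e$; $K!=\prod_e K(e)!$; $x^K=\prod_e x_e^{K(e)}$. $P_G=\prod_{\{i,j\}\in E,\ i<j}(\sum_{e\in E(i)}x_e-\sum_{e\in E(j)}x_e)$ in variables $x_e$, $e\in E$; $\mathrm{mon}(P)$ is the set of monomials with nonzero coefficient in $P$. $K\in\mathbb{N}^E$ is sufficient for $G$ if there exists $K'\in\mathbb{N}^E_{|E|}$ with $K'\le K$ and $x^{K'}\in\mathrm{mon}(P_G)$. In the polynomial ring $\mathbb{C}[x_1,\dots,x_n]$ (one variable per vertex) define $Q_E=\prod_{\{i,j\}\in E,\ i<j}(x_i-x_j)$ and, for $K\in\mathbb{N}^E$, $H_E^K=\prod_{\{i,j\}\in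 E,\ i<j}(x_i+x_j)^{K(\{i,j\})}$. On homogeneous polynomials of degree $m$ in $x_1,\dots,x_n$ define the inner product $\langle f,g\rangle=\sum_{K\in\mathbb{N}^n_m}K!\,\mathrm{coe}(x^K,f)\overline{\mathrm{coe}(x^K,g)}$, where $\mathrm{coe}(x^K,f)$ is the coefficient of $x^K$ in $f$. $W^K_{E,m}$ is the complex linear span of $\{H_E^{K'}:K'\le K,\ K'\in\mathbb{N}^E_m\}$. $C_G=(c_{ee'})_{e,e'\in E}$ where for $e=\{i,j\}$, $i<j$: $c_{ee'}=1$ if $e'\ne e$ shares the vertex $i$ with $e$, $c_{ee'}=-1$ if $e'\neq e$ shares the vertex $j$ with $e$, and $c_{ee'}=0$ otherwise. For $K'\in\mathbb{N}^E_{|E|}$, $C_G(K')$ is the $|E|\times|E|$ matrix whose columns consist of $K'(e)$ copies of the column of $C_G$ indexed by $e$, for each $e\in E$. $\mathrm{per}$ denotes the permanent. *)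

(* Defs.v *)
From mathcomp Require Import all_boot all_order all_algebra all_fingroup.
From mathcomp Require Import complex Rstruct.
From mathcomp Require Import mpoly.

Set Implicit Arguments.
Unset Strict Implicit.
Unset Printing Implicit Defensive.

Import Order.TTheory GRing.Theory Num.Theory.
Local Open Scope ring_scope.

Definition CC : numClosedFieldType := (Rdefinitions.R)[i].

(* A graph on V = {1,..,n} is encoded with vertex type 'I_n (vertex k+1 is
   the ordinal k, so the order on vertices is preserved).  An edge {i,j} with
   i < j is encoded as the ordered pair (i,j); E : {set 'I_n * 'I_n} with
   every element satisfying e.1 < e.2 (hypothesis [simple_graph E]). *)
Definition simple_graph n (E : {set 'I_n * 'I_n}) : Prop :=
  forall e, e \in E -> (e.1 < e.2)%N.

Definition edge n (E : {set 'I_n * 'I_n}) := {e : 'I_n * 'I_n | e \in E}.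

Definition incident n (v : 'I_n) (f : 'I_n * 'I_n) : bool :=
  (f.1 == v) || (f.2 == v).

Definition degree n (E : {set 'I_n * 'I_n}) (v : 'I_n) : nat :=
  #|[set f in E | incident v f]|.

Definition nice n (E : {set 'I_n * 'I_n}) : Prop :=
  forall e, e \in E -> ~ (degree E e.1 = 1%N /\ degree E e.2 = 1%N).

Definition leK n (E : {set 'I_n * 'I_n}) (K1 K2 : {ffun edge E -> nat}) : bool :=
  [forall e, (K1 e <= K2 e)%N].

Definition sumK n (E : {set 'I_n * 'I_n}) (K : {ffun edge E -> nat}) : nat :=
  (\sum_(e : edge E) K e)%N.

Definition xvar n (E : {set 'I_n * 'I_n}) (e : edge E)
  : {mpoly int[#|{: edge E}|]} := 'X_(enum_rank e).

Definition P_G n (E : {set 'I_n * 'I_n}) : {mpoly int[#|{: edge E}|]} :=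
  \prod_(e : edge E)
     (\sum_(f : edge E | incident (val e).1 (val f)) xvar f
      - \sum_(f : edge E | incident (val e).2 (val f)) xvar f).

Definition monE n (E : {set 'I_n * 'I_n}) (K : {ffun edge E -> nat})
  : 'X_{1.. #|{: edge E}|} :=
  [multinom K (enum_val i) | i < #|{: edge E}|].

Definition sufficient n (E : {set 'I_n * 'I_n}) (K : {ffun edge E -> nat}) : Prop :=
  exists K' : {ffun edge E -> nat},
    [/\ sumK K' = #|E|, leK K' K & (P_G E)@_(monE K') != 0].

Definition Q_E n (E : {set 'I_n * 'I_n}) : {mpoly CC[n]} :=
  \prod_(e : edge E) ('X_((val e).1) - 'X_((val e).2)).

Definition H_E n (E : {set 'I_n * 'I_n}) (K : {ffun edge E -> nat})
  : {mpoly CC[n]} :=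
  \prod_(e : edge E) ('X_((val e).1) + 'X_((val e).2)) ^+ K e.

Definition mfact n (m : 'X_{1..n}) : nat := (\prod_(i < n) (m i)`!)%N.

Definition ip n (d : nat) (f g : {mpoly CC[n]}) : CC :=
  \sum_(m : 'X_{1..n < d.+1} | mdeg m == d)
     (mfact m)%:R * f@_m * Num.conj (g@_m).

(* W^K_{E,d}: complex linear span of the H_E^{K'}, K' <= K, |K'| = d *)
Definition in_W n (E : {set 'I_n * 'I_n}) (K : {ffun edge E -> nat}) (d : nat)
  (F : {mpoly CC[n]}) : Prop :=
  exists s : seq (CC * {ffun edge E -> nat}),
    all (fun p => leK p.2 K && (sumK p.2 == d)) s /\
    F = \sum_(p <- s) p.1 *: H_E p.2.

Definition cG n (E : {set 'I_n * 'I_n}) (e e' : edge E) : int :=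
  if e' == e then 0
  else if incident (val e).1 (val e') then 1
  else if incident (val e).2 (val e') then -1
  else 0.

Definition per (R : comPzRingType) k (A : 'M[R]_k) : R :=
  \sum_(s : 'S_k) \prod_(i < k) A i (s i).

(* columns of C_G(K'): K'(e) copies of column e, edges in enum order *)
Definition col_edges n (E : {set 'I_n * 'I_n}) (K : {ffun edge E -> nat})
  : seq (edge E) :=
  flatten [seq nseq (K e) e | e <- enum {: edge E}].

Definition C_GK n (E : {set 'I_n * 'I_n}) (K : {ffun edge E -> nat})
  : 'M[int]_#|{: edge E}| :=
  \matrix_(i, j) cG (enum_val i) (nth (enum_val j) (col_edges K) j).

(* Main.v *)
Require Import Defs.
From mathcomp Require Import all_boot all_order all_algebra all_fingroup.
From mathcomp Require Import complex Rstruct.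
From mathcomp Require Import mpoly.
From mathcomp Require Import ring.
Set Implicit Arguments.
Unset Strict Implicit.
Unset Printing Implicit Defensive.
Import GRing.Theory Num.Theory.
Local Open Scope ring_scope.
Section IP.
Variable n : nat.
Implicit Types (f g : {mpoly CC[n]}).

Lemma ipD d f1 f2 g : ip d (f1 + f2) g = ip d f1 g + ip d f2 g.
Proof. by rewrite /ip -big_split; apply: eq_bigr => m _; rewrite mcoeffD mulrDr mulrDl. Qed.

Lemma ipZ d c f g : ip d (c *: f) g = c * ip d f g.
Proof. by rewrite /ip mulr_sumr; apply: eq_bigr => m _; rewrite mcoeffZ !mulrA [_ * c]mulrC. Qed.

Lemma ip0 d g : ip d 0 g = 0.
Proof. by rewrite /ip big1 // => m _; rewrite mcoeff0 mulr0 mul0r. Qed.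

Lemma ip_sum d (I : Type) (r : seq I) (P : pred I) F g :
  ip d (\sum_(i <- r | P i) F i) g = \sum_(i <- r | P i) ip d (F i) g.
Proof.
elim: r => [|i r IH]; first by rewrite !big_nil ip0.
by rewrite !big_cons; case: (P i); rewrite ?ipD IH.
Qed.

Lemma ipDr d f g1 g2 : ip d f (g1 + g2) = ip d f g1 + ip d f g2.
Proof. by rewrite /ip -big_split; apply: eq_bigr => m _; rewrite mcoeffD rmorphD mulrDr. Qed.

Lemma ipZr d c f g : ip d f (c *: g) = c^* * ip d f g.
Proof. by rewrite /ip mulr_sumr; apply: eq_bigr => m _; rewrite mcoeffZ rmorphM mulrCA. Qed.

Lemma ip0r d f : ip d f 0 = 0.
Proof. by rewrite /ip big1 // => m _; rewrite mcoeff0 rmorph0 mulr0. Qed.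

Lemma ip_sumr d (I : Type) (r : seq I) (P : pred I) F f :
  ip d f (\sum_(i <- r | P i) F i) = \sum_(i <- r | P i) ip d f (F i).
Proof.
elim: r => [|i r IH]; first by rewrite !big_nil ip0r.
by rewrite !big_cons; case: (P i); rewrite ?ipDr IH.
Qed.

End IP.
Section Adj.
Variables (n : nat) (i : 'I_n).
Implicit Types (f g : {mpoly CC[n]}).

Lemma mfactU (m : 'X_{1..n}) : mfact (m + U_(i))%MM = (mfact m * (m i).+1)%N.
Proof.
rewrite /mfact (bigD1 i) //= [in RHS](bigD1 i) //= mnmDE mnm1E eqxx addn1 factS.
rewrite (eq_bigr (fun k => (m k)`!)); last first.
  by move=> k /negbTE ki; rewrite mnmDE mnm1E eq_sym ki addn0.
by rewrite [RHS]ssrnat.mulnC ssrnat.mulnA.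
Qed.

Lemma coefXi0 f (m : 'X_{1..n}) : m i = 0%N -> ('X_i * f)@_m = 0.
Proof.
move=> mi0; rewrite mulrC; apply: memN_msupp_eq0; apply/negP => /=.
rewrite (perm_mem (msuppMX f U_(i))) => /mapP [m' _ em].
by move: mi0; rewrite em mnmDE mnm1E eqxx.
Qed.

Lemma bup_proof d (j : 'X_{1..n < d.+1}) : (mdeg (bmnm j + U_(i))%MM < d.+2)%N.
Proof. by rewrite mdegD mdeg1 addn1 ltnS; exact: bmdeg. Qed.

Definition bup d (j : 'X_{1..n < d.+1}) : 'X_{1..n < d.+2} := BMultinom (@bup_proof d j).
Definition bdown d (m : 'X_{1..n < d.+2}) : 'X_{1..n < d.+1} :=
  insubd (@bm0 n d) (bmnm m - U_(i))%MM.

Lemma ipX d f g : ip d.+1 ('X_i * f) g = ip d f (g^`M(i)).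
Proof.
rewrite /ip (bigID (fun m : 'X_{1..n < d.+2} => bmnm m i == 0%N)) /=.
rewrite big1 ?add0r; last first.
  by move=> m /andP [_ /eqP mi0]; rewrite coefXi0 // mulr0 mul0r.
rewrite (reindex_onto (@bup d) (@bdown d)) /=; last first.
  move=> m /andP [/eqP dm mi]; apply: val_inj => /=.
  have le1 : (U_(i) <= bmnm m)%MM by rewrite lep1mP.
  have dd : mdeg (bmnm m - U_(i))%MM = d.
    have := mdegD (bmnm m - U_(i))%MM U_(i); rewrite submK // mdeg1 dm addn1.
    by move/succn_inj => e; exact: esym e.
  rewrite /bdown insubdK ?submK //.
  by rewrite unfold_in /= dd.
apply: eq_big => [j | j _].
  rewrite /= mdegD mdeg1 addn1 eqSS mnmDE mnm1E eqxx addn1 /= andbT.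
  case: (mdeg j =P d) => //= dj; apply/eqP; apply: val_inj => /=.
  rewrite /bdown /bup /= insubdK /= ?addmK //.
  by rewrite unfold_in /=; exact: bmdeg.
rewrite /bup /=.
rewrite (mfactU (bmnm j)).
rewrite mcoeff_deriv.
have -> : ('X_i * f)@_(bmnm j + U_(i)) = f@_(bmnm j).
  by rewrite mulrC addmC mcoeffMX.
rewrite rmorphMn natrM -mulr_natr.
rewrite -[_ *+ (j i).+1]mulr_natr; ring.
Qed.
End Adj.

Section Lin.
Variable n : nat.

Definition lin (a : 'I_n -> CC) : {mpoly CC[n]} := \sum_i a i *: 'X_i.
Definition ip1 (a b : 'I_n -> CC) : CC := \sum_i a i * (b i)^*.

Lemma mderiv_lin i a : (lin a)^`M(i) = (a i)%:MP.
Proof.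
rewrite /lin raddf_sum (bigD1 i) //= big1 ?addr0.
  rewrite mderivZ mderivX mnm1E eqxx scale1r (_ : (U_(i) - U_(i))%MM = 0%MM) ?mpolyX0.
    exact: alg_mpolyC.
  by apply/mnmP => k; rewrite mnmBE mnm0E subnn.
move=> j ji; rewrite mderivZ mderivX mnm1E (negbTE ji) scale0r scaler0 //.
Qed.

Lemma lift0_lift d (j : 'I_d.+1) (k : 'I_d) :
  lift (lift ord0 j) (lift ord0 k) = lift ord0 (lift j k).
Proof.
apply: val_inj; rewrite /= /bump /=.
by rewrite ltnS addnS.
Qed.

Lemma lift_lift0 d (j : 'I_d.+1) : lift (lift ord0 j) ord0 = ord0 :> 'I_d.+2.
Proof. by apply: val_inj; rewrite /= /bump. Qed.

Lemma mderiv_prod d (v : 'I_d.+1 -> {mpoly CC[n]}) i :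
  (\prod_k v k)^`M(i) = \sum_j (v j)^`M(i) * \prod_(k < d) v (lift j k).
Proof.
elim: d v => [|d IH] v.
  by rewrite !big_ord1 big_ord0 mulr1.
rewrite big_ord_recl mderivM IH [RHS]big_ord_recl; congr (_ + _).
rewrite mulr_sumr; apply: eq_bigr => j _.
rewrite big_ord_recl lift_lift0 mulrCA; congr (_ * (_ * _)).
by apply: eq_bigr => k _; rewrite lift0_lift.
Qed.

End Lin.
Arguments lin {n}.
Arguments ip1 {n}.

Lemma sum_perm_split d (F : 'S_d.+1 -> CC) :
  \sum_(s : 'S_d.+1) F s = \sum_(j < d.+1) \sum_(t : 'S_d) F (lift_perm ord0 j t).
Proof.
rewrite (partition_big (fun s : 'S_d.+1 => s ord0) xpredT) //=.
apply: eq_bigr => j0 _.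
pose i0 : 'I_d.+1 := ord0.
rewrite (reindex (lift_perm i0 j0)); last first.
  pose ulsf i (s : 'S_d.+1) k := odflt k (unlift (s i) (s (lift i k))).
  have ulsfK i (s : 'S_d.+1) k: lift (s i) (ulsf i s k) = s (lift i k).
    rewrite /ulsf; have:= neq_lift i k.
    by rewrite -(can_eq (permK s)) => /unlift_some[] ? ? ->.
  have inj_ulsf: injective (ulsf i0 _).
    move=> s; apply: can_inj (ulsf (s i0) s^-1%g) _ => k'.
    by rewrite {1}/ulsf ulsfK !permK liftK.
  exists (fun s => perm (inj_ulsf s)) => [s _ | s].
    by apply/permP=> k'; rewrite permE /ulsf lift_perm_lift lift_perm_id liftK.
  move/(s _ =P _) => si0; apply/permP=> k.
  case: (unliftP i0 k) => [k'|] ->; rewrite ?lift_perm_id //.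
  by rewrite lift_perm_lift -si0 permE ulsfK.
by apply: eq_bigl => s; rewrite lift_perm_id eqxx.
Qed.

Section Main.
Variable n : nat.

Lemma ip00 : ip 0 (1 : {mpoly CC[n]}) 1 = 1.
Proof.
rewrite /ip (bigD1 (@bm0 n 0)) /=; last by rewrite mdeg0.
rewrite big1 ?addr0.
  rewrite mcoeff1 eqxx (_ : mfact _ = 1%N) ?mul1r ?conjC1 //.
  by rewrite /mfact big1 // => i _; rewrite mnm0E.
move=> m /andP [/eqP m0 mne]; exfalso; move/negP: mne; apply; apply/eqP.
by apply: val_inj => /=; apply/eqP; rewrite -mdeg_eq0 m0.
Qed.

Lemma ip_lin_prod d (a b : 'I_d -> 'I_n -> CC) :
  ip d (\prod_k lin (a k)) (\prod_k lin (b k)) =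
  \sum_(s : 'S_d) \prod_k ip1 (a k) (b (s k)).
Proof.
elim: d a b => [|d IH] a b.
  rewrite !big_ord0 ip00 (eq_bigr (fun _ => 1)) ?sumr_const ?card_Sn //.
  by move=> s _; rewrite big_ord0.
rewrite big_ord_recl {1}/lin mulr_suml ip_sum.
transitivity (\sum_i a ord0 i * ip d (\prod_(k < d) lin (a (lift ord0 k)))
                 ((\prod_k lin (b k))^`M(i))).
  by apply: eq_bigr => i _; rewrite -scalerAl ipZ ipX.
have hd := @mderiv_prod n d (fun k => lin (b k)).
rewrite (eq_bigr (fun i => a ord0 i * ip d (\prod_(k < d) lin (a (lift ord0 k)))
   (\sum_j (lin (b j))^`M(i) * \prod_(k < d) lin (b (lift j k))))); last first.
  by move=> i _; congr (_ * ip _ _ _); exact: hd.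
under eq_bigr => i _ do rewrite ip_sumr mulr_sumr.
rewrite exchange_big /=.
transitivity (\sum_(j < d.+1) ip1 (a ord0) (b j) *
   \sum_(t : 'S_d) \prod_(k < d) ip1 (a (lift ord0 k)) (b (lift j (t k)))).
  apply: eq_bigr => j _; rewrite /ip1 mulr_suml; apply: eq_bigr => i _.
  rewrite mderiv_lin mul_mpolyC ipZr.
  by rewrite (IH (fun k => a (lift ord0 k)) (fun k => b (lift j k))) mulrA.
rewrite sum_perm_split; apply: eq_bigr => j _; rewrite mulr_sumr.
apply: eq_bigr => t _; rewrite big_ord_recl lift_perm_id; congr (_ * _).
by apply: eq_bigr => k _; rewrite lift_perm_lift.
Qed.

End Main.

Lemma sum_perm_cast (R : comRingType) d1 d2 (h : d1 = d2) (F : nat -> nat -> R) :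
  \sum_(s : 'S_d1) \prod_(k < d1) F k (s k) = \sum_(s : 'S_d2) \prod_(k < d2) F k (s k).
Proof. by case: d2 / h. Qed.

Lemma sum_perm_inv (R : comRingType) d (F : 'I_d -> 'I_d -> R) :
  \sum_(s : 'S_d) \prod_k F k (s k) = \sum_(s : 'S_d) \prod_k F (s k) k.
Proof.
rewrite (reindex_inj invg_inj) /=; apply: eq_bigr => s _.
rewrite (reindex_perm s) /=; apply: eq_bigr => k _; by rewrite permK.
Qed.

Section Graph.
Variables (n : nat) (E : {set 'I_n * 'I_n}).
Hypothesis sE : simple_graph E.

Lemma card_edge : #|{: edge E}| = #|E|.
Proof. by rewrite card_sig; apply: eq_card. Qed.

Lemma size_col (K : {ffun edge E -> nat}) : size (col_edges K) = sumK K.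
Proof.
rewrite /col_edges size_flatten /shape -map_comp sumnE big_map /sumK big_enum /=.
by apply: eq_bigr => e _; rewrite /= size_nseq.
Qed.

Lemma prod_col (R : comRingType) (K : {ffun edge E -> nat}) (F : edge E -> R) :
  \prod_e F e ^+ K e = \prod_(x <- col_edges K) F x.
Proof.
rewrite /col_edges big_flatten /= big_map big_enum /=.
by apply: eq_bigr => e _; rewrite big_nseq iter_mulr_1.
Qed.

End Graph.

Section Lin2.
Variable N : nat.

Lemma lin_delta (j : 'I_N) : lin (fun i => (i == j)%:R) = 'X_j :> {mpoly CC[N]}.
Proof.
rewrite /lin (bigD1 j) //= eqxx scale1r big1 ?addr0 // => i /negbTE ->.
by rewrite scale0r.
Qed.

Lemma ip1_delta (j : 'I_N) b : ip1 (fun i => (i == j)%:R) b = (b j)^*.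
Proof.
rewrite /ip1 (bigD1 j) //= eqxx mul1r big1 ?addr0 // => i /negbTE ->.
by rewrite mul0r.
Qed.

Lemma lin_add (a b : 'I_N -> CC) : lin (fun i => a i + b i) = lin a + lin b.
Proof. by rewrite /lin -big_split; apply: eq_bigr => i _; rewrite scalerDl. Qed.

Lemma lin_sub (a b : 'I_N -> CC) : lin (fun i => a i - b i) = lin a - lin b.
Proof. by rewrite /lin -sumrB; apply: eq_bigr => i _; rewrite scalerBl. Qed.

Lemma ip1_add (a b c : 'I_N -> CC) : ip1 (fun i => a i + b i) c = ip1 a c + ip1 b c.
Proof. by rewrite /ip1 -big_split; apply: eq_bigr => i _; rewrite mulrDl. Qed.

Lemma ipXm d (M : 'X_{1..N}) (g : {mpoly CC[N]}) :
  mdeg M = d -> ip d 'X_[M] g = (mfact M)%:R * (g@_M)^*.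
Proof.
move=> h; have hb : (mdeg M < d.+1)%N by rewrite h.
rewrite /ip (bigD1 (BMultinom hb)) /=; last by rewrite h.
rewrite mcoeffX eqxx mulr1 big1 ?addr0 // => m /andP [_ ne].
rewrite mcoeffX (_ : (M == bmnm m) = false) ?mulr0 ?mul0r //.
apply/negbTE; apply: contra ne => /eqP e; apply/eqP/val_inj; by rewrite /= e.
Qed.

End Lin2.

Section Graph2.
Variables (n : nat) (E : {set 'I_n * 'I_n}).
Hypothesis sE : simple_graph E.

Definition hf (x : edge E) : 'I_n -> CC :=
  fun i => (i == (val x).1)%:R + (i == (val x).2)%:R.
Definition qf (x : edge E) : 'I_n -> CC :=
  fun i => (i == (val x).1)%:R - (i == (val x).2)%:R.

Lemma inc_nat (f : edge E) (v : 'I_n) :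
  ((val f).1 == v)%:R + ((val f).2 == v)%:R = (incident v (val f))%:R :> CC.
Proof.
have := sE (valP f); rewrite /incident.
case: eqP => [<-|_]; case: eqP => [e|_] //=; rewrite ?addr0 ?add0r //.
by rewrite e ltnn.
Qed.

Lemma cG_inc (r f : edge E) :
  (cG r f)%:~R = (incident (val r).1 (val f))%:R - (incident (val r).2 (val f))%:R :> CC.
Proof.
rewrite /cG; case: eqP => [->|ne].
  by rewrite /incident !eqxx orbT /= subrr.
have hr := sE (valP r); have hf := sE (valP f).
have key : ~~ (incident (val r).1 (val f) && incident (val r).2 (val f)).
  apply/negP; rewrite /incident => /andP [h1 h2].
  move: h1 h2 hr hf; case ef : (val f) => [a b]; case er : (val r) => [c d] /=.
  case/orP => /eqP e1; case/orP => /eqP e2; subst => hr hf.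
  - by have := ltnn d; rewrite hr.
  - by apply: ne; apply: val_inj; rewrite ef er.
  - by move: (ltn_trans hr hf); rewrite ssrnat.ltnn.
  - by have := ltnn d; rewrite hr.
move: key; case: (incident _ _) => /=; case: (incident _ _) => //= _.
- by rewrite subr0.
- by rewrite sub0r.
- by rewrite subrr.
Qed.

Lemma lin_hf x : lin (hf x) = 'X_((val x).1) + 'X_((val x).2).
Proof. by rewrite /hf lin_add !lin_delta. Qed.

Lemma lin_qf x : lin (qf x) = 'X_((val x).1) - 'X_((val x).2).
Proof. by rewrite /qf lin_sub !lin_delta. Qed.

Lemma ip1_hq (f r : edge E) : ip1 (hf f) (qf r) = (cG r f)%:~R.
Proof.
rewrite /hf ip1_add !ip1_delta cG_inc -!inc_nat /qf !rmorphB !rmorph_nat.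
ring.
Qed.


Definition lf (r : edge E) : 'I_#|{: edge E}| -> CC :=
  fun v => (incident (val r).1 (val (enum_val v)))%:R
         - (incident (val r).2 (val (enum_val v)))%:R.

Lemma sum_inc (v : 'I_n) :
  \sum_(f : edge E | incident v (val f)) ('X_(enum_rank f) : {mpoly CC[#|{: edge E}|]})
  = lin (fun w => (incident v (val (enum_val w)))%:R).
Proof.
rewrite /lin (reindex (@enum_rank _)) /=; last exact: onW_bij (@enum_rank_bij _).
rewrite big_mkcond; apply: eq_bigr => f _; rewrite enum_rankK.
by case: ifP => _; rewrite ?scale1r ?scale0r.
Qed.

Lemma map_PG :
  map_mpoly (fun z : int => z%:~R : CC) (P_G E) = \prod_r lin (lf r).
Proof.
rewrite /P_G rmorph_prod; apply: eq_bigr => r _.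
rewrite rmorphB !rmorph_sum /lf lin_sub -!sum_inc.
by congr (_ - _); apply: eq_bigr => f _; rewrite /xvar; apply: map_mpolyX.
Qed.

Lemma ip1_dl (f r : edge E) :
  ip1 (fun w => (w == enum_rank f)%:R) (lf r) = (cG r f)%:~R.
Proof. by rewrite ip1_delta cG_inc /lf enum_rankK rmorphB !rmorph_nat. Qed.

End Graph2.

Section Key.
Variables (n : nat) (E : {set 'I_n * 'I_n}) (e0 : edge E) (K : {ffun edge E -> nat}).
Hypotheses (sE : simple_graph E) (hK : sumK K = #|E|).

Definition rowe k := nth e0 (enum {: edge E}) k.
Definition cole k := nth e0 (col_edges K) k.
Definition Tsum : CC :=
  \sum_(s : 'S_#|E|) \prod_(k < #|E|) (cG (rowe (s k)) (cole k))%:~R.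

Lemma prod_nth (R : comRingType) (s : seq (edge E)) (F : edge E -> R) :
  \prod_(x <- s) F x = \prod_(k < size s) F (nth e0 s k).
Proof. by rewrite (big_nth e0) big_mkord. Qed.

Lemma prod_edges (R : comRingType) (F : edge E -> R) :
  \prod_(e : edge E) F e = \prod_(k < #|E|) F (rowe k).
Proof.
rewrite (_ : \prod_(e : edge E) F e = \prod_(e <- enum {: edge E}) F e); last first.
  by rewrite big_enum.
by rewrite prod_nth -cardE card_edge.
Qed.

Lemma H_eq : H_E K = \prod_(k < #|E|) lin (hf (cole k)).
Proof.
rewrite /H_E prod_col prod_nth size_col hK; apply: eq_bigr => k _.
by rewrite lin_hf.
Qed.

Lemma Q_eq : Q_E E = \prod_(k < #|E|) lin (qf (rowe k)).
Proof. by rewrite /Q_E prod_edges; apply: eq_bigr => k _; rewrite lin_qf. Qed.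

Lemma K1 : ip #|E| (H_E K) (Q_E E) = Tsum.
Proof.
rewrite H_eq Q_eq (ip_lin_prod (fun k => hf (cole k)) (fun k => qf (rowe k))); apply: eq_bigr => s _; apply: eq_bigr => k _.
exact: ip1_hq.
Qed.

Lemma monE_deg : mdeg (monE K) = #|E|.
Proof.
rewrite mdegE -hK /sumK (reindex (@enum_rank _)) /=; last exact: onW_bij (@enum_rank_bij _).
by apply: eq_bigr => e _; rewrite mnmE enum_rankK.
Qed.

Lemma X_eq : 'X_[monE K] = \prod_(k < #|E|) lin (fun w => (w == enum_rank (cole k))%:R)
  :> {mpoly CC[#|{: edge E}|]}.
Proof.
rewrite mpolyXE_id (reindex (@enum_rank _)) /=; last exact: onW_bij (@enum_rank_bij _).
rewrite (eq_bigr (fun e => 'X_(enum_rank e) ^+ K e)); last first.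
  by move=> e _; rewrite mnmE enum_rankK.
rewrite prod_col prod_nth size_col hK; apply: eq_bigr => k _.
by rewrite lin_delta.
Qed.

Lemma K2 : (mfact (monE K))%:R * ((P_G E)@_(monE K))%:~R = Tsum.
Proof.
have := ipXm (map_mpoly (fun z : int => z%:~R : CC) (P_G E)) monE_deg.
rewrite mcoeff_map_mpoly /= rmorph_int => <-.
rewrite X_eq map_PG prod_edges (ip_lin_prod (fun k (w : 'I_#|{: edge E}|) => (w == enum_rank (cole k))%:R) (fun k => lf (rowe k))); apply: eq_bigr => s _; apply: eq_bigr => k _.
exact: ip1_dl.
Qed.

Lemma K3 : (per (C_GK K))%:~R = Tsum.
Proof.
have -> : per (C_GK K) = \sum_(s : 'S_#|E|) \prod_(k < #|E|) cG (rowe (s k)) (cole k).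
  rewrite /per -(sum_perm_cast (@card_edge n E) (fun k l => cG (rowe l) (cole k))).
  rewrite -(sum_perm_inv (fun (i j : 'I_#|{: edge E}|) => cG (rowe i) (cole j))).
  apply: eq_bigr => s _; apply: eq_bigr => i _.
  rewrite mxE /rowe /cole (enum_val_nth e0).
  by rewrite (set_nth_default e0 (enum_val (s i))) // size_col hK -card_edge.
by rewrite rmorph_sum; apply: eq_bigr => s _; rewrite rmorph_prod.
Qed.

End Key.

Theorem lemma2p1 (n : nat) (E : {set 'I_n * 'I_n}) :
  simple_graph E -> nice E ->
  forall K : {ffun edge E -> nat},
  [<-> sufficient K;
       exists K' : {ffun edge E -> nat},
         [/\ sumK K' = #|E|, leK K' K & ip #|E| (H_E K') (Q_E E) != 0];
       exists F : {mpoly CC[n]}, in_W K #|E| F /\ ip #|E| F (Q_E E) != 0;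
       exists K' : {ffun edge E -> nat},
         [/\ sumK K' = #|E|, leK K' K & per (C_GK K') != 0]].
Proof.
move=> sE _ K.
have h32 : (exists F : {mpoly CC[n]}, in_W K #|E| F /\ ip #|E| F (Q_E E) != 0) ->
    exists K' : {ffun edge E -> nat},
         [/\ sumK K' = #|E|, leK K' K & ip #|E| (H_E K') (Q_E E) != 0].
  move=> [F [[s [hs ->]] nz]]; move: nz; rewrite ip_sum.
  elim: s hs => [|p s IH] /=; first by rewrite big_nil eqxx.
  move=> /andP [/andP [hle /eqP hsz] hs]; rewrite big_cons.
  case: (boolP (ip #|E| (H_E p.2) (Q_E E) == 0)) => [/eqP z | nz]; last first.
    by move=> _; exists p.2.
  rewrite ipZ z mulr0 add0r; exact: IH.
case: (pickP (@predT (edge E))) => [e0 _ | emp]; last first.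
  have c0 : #|E| = 0%N.
    by rewrite -card_edge; apply: eq_card0 => e; have := emp e.
  have p1 (R : comRingType) (F : edge E -> R) : \prod_e F e = 1.
    by rewrite big1 // => e _; have := emp e.
  pose K0 : {ffun edge E -> nat} := [ffun _ => 0%N].
  have hs0 : sumK K0 = #|E| by rewrite c0 /sumK big1 // => e _; rewrite ffunE.
  have hl0 : leK K0 K by apply/forallP => e; rewrite ffunE.
  have HQ : ip #|E| (H_E K0) (Q_E E) = 1 by rewrite /H_E /Q_E !p1 c0 ip00.
  have s1 : sufficient K.
    exists K0; split => //; rewrite /P_G p1 mcoeff1.
    rewrite (_ : monE K0 = 0%MM) ?eqxx ?oner_neq0 //.
    by apply/mnmP => i; rewrite mnmE ffunE mnm0E.
  have s2 : exists K' : {ffun edge E -> nat},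
         [/\ sumK K' = #|E|, leK K' K & ip #|E| (H_E K') (Q_E E) != 0].
    by exists K0; rewrite HQ oner_neq0.
  have s3 : exists F : {mpoly CC[n]}, in_W K #|E| F /\ ip #|E| F (Q_E E) != 0.
    exists (H_E K0); rewrite HQ oner_neq0; split => //.
    exists [:: (1, K0)]; split; first by rewrite /= hl0 hs0 eqxx.
    by rewrite big_seq1 scale1r.
  have s4 : exists K' : {ffun edge E -> nat},
         [/\ sumK K' = #|E|, leK K' K & per (C_GK K') != 0].
    exists K0; split => //; rewrite /per (eq_bigr (fun _ => 1)); last first.
      move=> s _; apply: big1 => i _; exfalso; have := ltn_ord i.
      by move: (nat_of_ord i) => k; rewrite card_edge c0.
    by rewrite sumr_const card_Sn card_edge c0 oner_neq0.
  by tfae => _.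
have e1 K' (hK' : sumK K' = #|E|) :
    ((P_G E)@_(monE K') != 0) = (Tsum e0 K' != 0).
  rewrite -(K2 e0 sE hK') mulf_eq0 negb_or pnatr_eq0 intr_eq0 -lt0n /mfact.
  by rewrite prodn_gt0 // => i; exact: fact_gt0.
have e2 K' (hK' : sumK K' = #|E|) :
    (ip #|E| (H_E K') (Q_E E) != 0) = (Tsum e0 K' != 0).
  by rewrite (K1 e0 sE hK').
have e4 K' (hK' : sumK K' = #|E|) :
    (per (C_GK K') != 0) = (Tsum e0 K' != 0).
  by rewrite -(K3 e0 hK') intr_eq0.
tfae.
- move=> [K' [hs hl hc]]; exists K'; split => //; by rewrite e2 // -e1.
- move=> [K' [hs hl hc]]; exists (H_E K'); split => //.
  exists [:: (1, K')]; split; first by rewrite /= hl hs eqxx.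
  by rewrite big_seq1 scale1r.
- move=> /h32 [K' [hs hl hc]]; exists K'; split => //; by rewrite e4 // -e2.
- move=> [K' [hs hl hc]]; exists K'; split => //; by rewrite e1 // -e4.
Qed.
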